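(* For every integer $n\geq 1$ there exists a non-empty crowded T$_1$ space $Y_n$ that is hereditarily $(n+1)$-irresolvable and has a crowded dense $n$-partition.
   Context: A space is crowded if it has no isolated points; a subset $S$ of $X$ is crowded in $X$ if it has no isolated points as a subspace. A $k$-partition of $X$ is a family of exactly $k$ non-empty, pairwise disjoint subsets (cells) with union $X$; it is dense if each cell is dense in $X$, and crowded if each cell is crowded. A space is $k$-resolvable if it has $k$ pairwise disjoint non-empty dense subsets, $k$-irresolvable otherwise, and hereditarily $k$-irresolvable if every non-empty subspace is $k$-irresolvable. *)

(* Defs.v *)
From mathcomp Require Import all_boot all_order all_algebra.
From mathcomp Require Import all_classical all_reals all_analysis.
Set Implicit Arguments. Unset Strict Implicit. Unset Printing Implicit Defensive.
Local Open Scope classical_set_scope.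

Section Defs.
Context {T : topologicalType}.

Definition isolated_in (S : set T) (x : T) : Prop :=
  S x /\ exists U : set T, open U /\ U `&` S = [set x].

Definition crowded_in (S : set T) : Prop := forall x, ~ isolated_in S x.

Definition crowded_space : Prop := crowded_in setT.

Definition dense_in (Y D : set T) : Prop :=
  forall U : set T, open U -> U `&` Y !=set0 -> U `&` D !=set0.

Definition resolvable_in (k : nat) (Y : set T) : Prop :=
  exists D : 'I_k -> set T,
    [/\ forall i, D i `<=` Y,
        forall i, D i !=set0,
        forall i j, i != j -> D i `&` D j = set0
      & forall i, dense_in Y (D i)].

Definition hereditarily_irresolvable (k : nat) : Prop :=
  forall Y : set T, Y !=set0 -> ~ resolvable_in k Y.

Definition is_partition (k : nat) (P : 'I_k -> set T) : Prop :=
  [/\ forall i, P i !=set0,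
      forall i j, i != j -> P i `&` P j = set0
    & \bigcup_(i in [set: 'I_k]) P i = setT].

Definition crowded_dense_partition (k : nat) (P : 'I_k -> set T) : Prop :=
  [/\ is_partition P, forall i, dense (P i) & forall i, crowded_in (P i)].

End Defs.

(* Main.v *)
Require Import Defs.
From HB Require Import structures.
From mathcomp Require Import all_boot all_order all_algebra.
From mathcomp Require Import all_classical all_reals all_analysis.
Local Open Scope classical_set_scope.

Definition U0 : set_system nat := projT1 (cid (ultraFilterLemma (@eventually_filter))).
Lemma U0_ultra : UltraFilter U0.
Proof. by case: (projT2 (cid (ultraFilterLemma (@eventually_filter)))). Qed.
#[global] Existing Instance U0_ultra.
Lemma U0_ev : \oo `<=` U0.
Proof. by case: (projT2 (cid (ultraFilterLemma (@eventually_filter)))). Qed.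
Lemma U0_free y : U0 (~` [set y]).
Proof. apply: U0_ev; exists y.+1 => // m /= hm my; rewrite my ltnn in hm. done. Qed.
Lemma U0_disj A B : U0 A -> U0 B -> A `&` B = set0 -> False.
Proof.
move=> hA hB hAB; have h : U0 (A `&` B) by apply: filterI.
by rewrite hAB in h; apply: filter_not_empty h.
Qed.
Arguments U0_disj {A B}.
Lemma U0_ex {A} : U0 A -> A !=set0.
Proof. by move=> h; apply: filter_ex h. Qed.

Definition Yn (n : nat) : Type := (nat * 'I_n)%type.
HB.instance Definition _ n := Choice.on (Yn n).

Definition slice {n : nat} (U : set (Yn n)) (i : ordinal n) : set nat := fun m => U (m, i).
Definition opY {n} (U : set (Yn n)) : Prop := U = set0 \/ forall i, U0 (slice U i).

Lemma opYT n : opY (@setT (Yn n)).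
Proof. by right=> i; apply: filterS filterT. Qed.
Lemma opYI n : setI_closed (@opY n).
Proof.
move=> A B [->|hA]; first by left; rewrite set0I.
move=> [->|hB]; first by left; rewrite setI0.
by right=> i; apply: filterS (filterI (hA i) (hB i)).
Qed.
Lemma opYU n (I : Type) (f : I -> set (Yn n)) : (forall i, opY (f i)) ->
    opY (\bigcup_i f i).
Proof.
move=> hf; case: (pselect (exists j, f j !=set0)) => [[j [x fx]]|nj].
  right=> i; case: (hf j) => [fj|hj]; first by rewrite fj in fx.
  by apply: filterS (hj i) => m fm; exists j.
left; apply/seteqP; split=> // x [j _ fx]; apply: nj; by exists j, x.
Qed.

HB.instance Definition _ n := isOpenTopological.Build (Yn n) (@opYT n) (@opYI n) (@opYU n).

Lemma openY n (U : set (Yn n)) : open U <-> opY U.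
Proof.
rewrite openE /interior /=; split.
  move=> hU.
  have -> : U = \bigcup_(B : {B : set (Yn n) & opY B /\ B `<=` U}) projT1 B.
    apply/seteqP; split; last by move=> p [B _ Bp]; have [_] := projT2 B; apply.
    move=> p /hU [B [Bop Bp sBA]]; by exists (existT _ B (conj Bop sBA)).
  by apply: opYU => B; have [] := projT2 B.
by move=> hU p Up; exists U; split.
Qed.

Section Props.
Variable n : nat.
Hypothesis hn : (1 <= n)%N.
Let i0 : 'I_n := Ordinal hn.

Lemma Y_crowded : @crowded_space (Yn n).
Proof.
move=> x [_ [U [/openY oU hU]]].
have Ux : U x by have : [set x] x by []; rewrite -hU => -[].
case: oU => [U0e|hs]; first by rewrite U0e in Ux.
apply: (U0_disj (hs x.2) (U0_free x.1)); apply/seteqP; split=> // m [Um nm].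
apply: nm; have : (U `&` setT) (m, x.2) by [].
by rewrite hU => <-.
Qed.

Lemma Y_T1 : @accessible_space (Yn n).
Proof.
move=> x y nxy; exists (~` [set y]); split.
- apply/openY; right=> i; apply: filterS (U0_free y.1) => m ny /= ey.
  by apply: ny; rewrite -ey.
- by rewrite inE => /= exy; rewrite exy eqxx in nxy.
- by rewrite inE /= => /(_ erefl).
Qed.

Lemma Y_hered : @hereditarily_irresolvable (Yn n) n.+1.
Proof.
move=> Y [y0 Yy0] [D [DY Dne Ddis Dden]].
have h01 : (ord0 : 'I_n.+1) != (Ordinal (ltnSn n)).
  by apply/eqP => /(congr1 val) /= e; move: hn; rewrite -e.
case: (pselect (exists i, U0 (slice Y i))) => [[i1 Yi1]|nY].
  have hk : forall k, exists i, U0 (slice (D k) i).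
    move=> k; apply: contrapT => nk.
    have hc : forall i, U0 (~` slice (D k) i).
      move=> i; case: (in_ultra_setVsetC (slice (D k) i) U0_ultra) => // h.
      by exfalso; apply: nk; exists i.
    have [z [zV zD]] : (~` D k) `&` D k !=set0.
      apply: Dden.
        by apply/openY; right=> i; exact: hc.
      have [m [Ym nDm]] : slice Y i1 `&` ~` slice (D k) i1 !=set0.
        by apply: U0_ex; apply: filterI.
      by exists (m, i1).
    exact: zV.
  have [f hf] : exists f : 'I_n.+1 -> 'I_n, forall k, U0 (slice (D k) (f k)).
    by case: (choice hk) => f hf; exists f.
  have [k1 [k2 [ef nk]]] : exists k1 k2, f k1 = f k2 /\ k1 <> k2.
    apply: contrapT => H.
    have finj : injective f.
      move=> a b e; apply: contrapT => ne; apply: H; by exists a, b.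
    by have := @leq_card _ _ f finj; rewrite !card_ord ltnn.
  apply: (U0_disj (hf k1) (hf k2)); rewrite ef.
  apply/seteqP; split=> // m [h1 h2].
  have : (D k1 `&` D k2) (m, f k2) by [].
  by rewrite Ddis //; apply/eqP.
have [y Dy] := Dne ord0.
have [z [[zY|zy] zD]] : (~` Y `|` [set y]) `&` D (Ordinal (ltnSn n)) !=set0.
    apply: Dden; last by exists y; split; [right|apply: DY Dy].
    apply/openY; right=> i.
    case: (in_ultra_setVsetC (slice Y i) U0_ultra) => h.
      by exfalso; apply: nY; exists i.
    by apply: filterS h => m hm; left.
  by exfalso; apply: zY; apply: DY zD.
have : (D ord0 `&` D (Ordinal (ltnSn n))) y by split=> //; rewrite -zy.
by rewrite (Ddis _ _ h01).
Qed.

Definition Pc (i : 'I_n) : set (Yn n) := [set p | p.2 = i].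

Lemma Y_part : crowded_dense_partition Pc.
Proof.
split.
- split.
  + by move=> i; exists (0%N, i).
  + move=> i j nij; apply/seteqP; split=> // p [e1 e2].
    by move: nij; rewrite -e1 -e2 eqxx.
  + apply/seteqP; split=> // p _; by exists p.2.
- move=> i O [x Ox] /openY [Oe|hO]; first by rewrite Oe in Ox.
  have [m Om] := U0_ex (hO i); by exists (m, i).
- move=> i x [Px [U [/openY oU hU]]].
  have Ux : U x by have : [set x] x by []; rewrite -hU => -[].
  case: oU => [U0e|hs]; first by rewrite U0e in Ux.
  apply: (U0_disj (hs i) (U0_free x.1)); apply/seteqP; split=> // m [Um nm].
  apply: nm; have : (U `&` Pc i) (m, i) by [].
  by rewrite hU => <-.
Qed.

End Props.

Theorem theorem4 (n : nat) (hn : (1 <= n)%N) :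
  exists Y : topologicalType,
    [/\ [set: Y] !=set0,
        @crowded_space Y,
        @accessible_space Y,
        @hereditarily_irresolvable Y n.+1
      & exists P : 'I_n -> set Y, crowded_dense_partition P].
Proof.
exists (Yn n); split.
- by exists (0%N, Ordinal hn).
- exact: Y_crowded.
- exact: Y_T1.
- exact: Y_hered.
- by exists (@Pc n); apply: Y_part.
Qed.
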